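(* Let $\mathbf{a}=\langle a_1,\dots,a_s\rangle$ and $\mathbf{b}=\langle b_1,\dots,b_t\rangle$ be integer vectors with $a_1+\cdots+a_s=b_1+\cdots+b_t$, and let $n,m$ be positive integers. Let $r+1=\max(s,n+t)$ and \[\delta=a_1\varepsilon_1+\cdots+a_s\varepsilon_s-(b_1\varepsilon_{n+1}+\cdots+b_t\varepsilon_{n+t})\in\mathbb{Z}^{r+1}.\] Let $\Lambda=\{\varepsilon_i-\varepsilon_j:1\le i<j\le r+1,\ i\le n\}\subseteq\Phi^+_{A_r}$ and \[Q_\Lambda(\delta)=\Big\{p\in P_\Lambda(\delta):\ a_j+\#\{\text{elements of }p\text{ of the form }\varepsilon_i-\varepsilon_j\}\le m\ \text{for all } j\ge1\Big\},\] where $a_j=0$ for $j>s$ and elements of $p$ are counted with multiplicity. Then the map sending a juggling sequence to the multiset of roots $\varepsilon_i-\varepsilon_{i+j}$ (one per throw at time $i$ to height $j$) is a bijection from $\mathrm{JS}(\mathbf{a},\mathbf{b},n,m)$ onto $Q_\Lambda(\delta)$; hence $\mathsf{js}(\mathbf{a},\mathbf{b},n,m)=|Q_\Lambda(\delta)|$. Moreover, without hand capacity constraint, $\mathsf{js}(\mathbf{a},\mathbf{b},n)=K_\Lambda(\delta)$.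
   Context: A juggling state is a finitely supported integer vector $\mathbf{s}=\langle s_1,s_2,\dots\rangle$ indexed by heights (trailing zeros omitted; negative entries are magic balls). A juggling sequence of length $n$ from $\mathbf{a}$ to $\mathbf{b}$ is a sequence $(\mathbf{s}_0,\dots,\mathbf{s}_n)$ with $\mathbf{s}_0=\mathbf{a}$, $\mathbf{s}_n=\mathbf{b}$, such that for each $1\le i\le n$ there are nonnegative integers $c^{(i)}_k$ (finitely many nonzero) with $\sum_k c^{(i)}_k=(\mathbf{s}_{i-1})_1$ and $(\mathbf{s}_i)_k=(\mathbf{s}_{i-1})_{k+1}+c^{(i)}_k$ for all $k\ge1$; $c^{(i)}_j$ is the number of throws at time $i$ to height $j$. It has hand capacity $m$ if all entries of all $\mathbf{s}_i$ are $\le m$. $\mathrm{JS}(\mathbf{a},\mathbf{b},n,m)$ is the set of such sequences with hand capacity $m$, $\mathsf{js}(\mathbf{a},\mathbf{b},n,m)$ its cardinality; $\mathrm{JS}(\mathbf{a},\mathbf{b},n)$, $\mathsf{js}(\mathbf{a},\mathbf{b},n)$ are the same without hand capacity constraint. $\Phi^+_{A_r}=\{\varepsilon_i-\varepsilon_j:1\le i<j\le r+1\}\subset\mathbb{R}^{r+1}$; for $\Lambda\subseteq\Phi^+_{A_r}$, $P_\Lambda(\mu)$ is the set of finite multisets of elements of $\Lambda$ summing to $\mu$, and $K_\Lambda(\mu)=|P_\Lambda(\mu)|$. *)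

(* Defs.v *)
From HB Require Import structures.
From mathcomp Require Import all_boot all_order all_algebra.
Set Implicit Arguments. Unset Strict Implicit. Unset Printing Implicit Defensive.
Import Order.TTheory GRing.Theory Num.Theory.
Local Open Scope ring_scope.

(** Juggling states: finitely supported integer vectors <s_1, s_2, ...>,
    represented canonically by the list [s_1; ...; s_L] with trailing zeros
    omitted. *)
Fixpoint trim (s : seq int) : seq int :=
  match s with
  | [::] => [::]
  | x :: s' => let t := trim s' in
               if (t == [::]) && (x == 0) then [::] else x :: t
  end.

Definition ent (s : seq int) (k : nat) : int := nth 0 s k.-1.

Definition jstep (s s' : seq int) : Prop :=
  exists (c : nat -> nat) (N : nat),
    (forall k, (N < k)%N -> c k = 0%N) /\
    \sum_(1 <= k < N.+1) (c k)%:Z = ent s 1 /\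
    (forall k, (0 < k)%N -> ent s' k = ent s k.+1 + (c k)%:Z).

Definition JSeq (a b : seq int) (n : nat) (ss : seq (seq int)) : Prop :=
  [/\ size ss = n.+1,
      all (fun s => trim s == s) ss,
      nth [::] ss 0 = trim a,
      nth [::] ss n = trim b
    & forall i, (i < n)%N -> jstep (nth [::] ss i) (nth [::] ss i.+1)].

Definition handcap (m : nat) (ss : seq (seq int)) : Prop :=
  forall s, s \in ss -> forall x, x \in s -> x <= m%:Z.

Definition JS (a b : seq int) (n m : nat) (ss : seq (seq int)) : Prop :=
  JSeq a b n ss /\ handcap m ss.

Definition card_is (T : eqType) (P : T -> Prop) (k : nat) : Prop :=
  exists l : seq T, [/\ uniq l, (forall x, x \in l <-> P x) & size l = k].

(** Coordinates 1..r+1 are represented by ordinals 0..r of 'I_R, R = r+1.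
    The root eps_i - eps_j is the pair (i-1, j-1). Multisets of roots are
    multiplicity functions. *)
Definition Rdim (a b : seq int) (n : nat) : nat := maxn (size a) (n + size b).

Definition Lam (R n : nat) (ij : 'I_R * 'I_R) : bool :=
  (ij.1 < ij.2)%N && (ij.1 < n)%N.

Definition PL (R : nat) (L : pred ('I_R * 'I_R)) (mu : 'I_R -> int)
    (p : {ffun 'I_R * 'I_R -> nat}) : Prop :=
  (forall ij, ~~ L ij -> p ij = 0%N) /\
  (forall k : 'I_R,
     \sum_(ij : 'I_R * 'I_R) (p ij)%:Z * ((ij.1 == k)%:Z - (ij.2 == k)%:Z)
     = mu k).

Definition delta (R : nat) (a b : seq int) (n : nat) (k : 'I_R) : int :=
  nth 0 a k - (if (n <= k)%N then nth 0 b (k - n) else 0).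

Definition QL (R : nat) (a b : seq int) (n m : nat)
    (p : {ffun 'I_R * 'I_R -> nat}) : Prop :=
  PL (@Lam R n) (delta a b n) p /\
  (forall k : 'I_R, nth 0 a k + (\sum_(i : 'I_R) p (i, k))%:Z <= m%:Z).

(** The map: each throw at time i to height j gives eps_i - eps_{i+j};
    the number of such throws is c^{(i)}_j = (s_i)_j - (s_{i-1})_{j+1}. *)
Definition jmap (R n : nat) (ss : seq (seq int)) : {ffun 'I_R * 'I_R -> nat} :=
  [ffun ij : 'I_R * 'I_R =>
     if (ij.1 < ij.2)%N && (ij.1 < n)%N then
       `| ent (nth [::] ss ij.1.+1) (ij.2 - ij.1)
          - ent (nth [::] ss ij.1) (ij.2 - ij.1).+1 |%N
     else 0%N].

(* Main.v *)
Require Import Defs.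
From HB Require Import structures.
From mathcomp Require Import all_boot all_order all_algebra.
From mathcomp Require Import ring lra zify.
Import Order.TTheory GRing.Theory Num.Theory.
Local Open Scope ring_scope.
Set Implicit Arguments. Unset Strict Implicit.

Lemma nth_trim (s : seq int) i : nth 0 (trim s) i = nth 0 s i.
Proof.
elim: s i => [|x s IH] i //=.
case: ifP => [/andP [/eqP E /eqP ->]|_].
  case: i => [|i] //=; by rewrite -IH E nth_nil.
by case: i.
Qed.

Lemma trim_nil (s : seq int) : (forall i, nth 0 s i = 0) -> trim s = [::].
Proof.
elim: s => [|x s IH] //= H.
rewrite IH; last by move=> i; exact: (H i.+1).
by have /= -> := H 0%N.
Qed.

Lemma trim_eq_nth (s s' : seq int) :
  (forall i, nth 0 s i = nth 0 s' i) -> trim s = trim s'.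
Proof.
elim: s s' => [|x s IH] s' H.
  by rewrite (@trim_nil s') // => i; rewrite -H nth_nil.
case: s' H => [|y s'] H.
  by rewrite trim_nil // => i; rewrite H nth_nil.
have -> : x = y by exact: (H 0%N).
by rewrite /= (IH s') // => i; exact: (H i.+1).
Qed.

Lemma trim_id (s : seq int) : trim (trim s) = trim s.
Proof. by apply: trim_eq_nth => i; rewrite nth_trim. Qed.

Lemma trimmed_eq (s s' : seq int) : trim s = s -> trim s' = s' ->
  (forall i, nth 0 s i = nth 0 s' i) -> s = s'.
Proof. by move=> E E' H; rewrite -E -E'; apply: trim_eq_nth. Qed.

Lemma mem_trim x (s : seq int) : x \in trim s -> x \in s.
Proof.
elim: s => [|y s IH] //=.
case: ifP => // _; rewrite !inE => /orP [->//|/IH ->]; by rewrite orbT.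
Qed.

Lemma nth_le (s : seq int) (m : nat) i :
  (forall x, x \in s -> x <= m%:Z) -> nth 0 s i <= m%:Z.
Proof.
move=> H; case: (ltnP i (size s)) => Hi; first by apply: H; exact: mem_nth.
by rewrite nth_default.
Qed.

Lemma PoszS (I : Type) (r : seq I) (P : pred I) (F : I -> nat) :
  ((\sum_(i <- r | P i) F i)%N : int) = \sum_(i <- r | P i) (F i)%:Z.
Proof. exact: (big_morph Posz PoszD erefl). Qed.

Lemma sum_ext0 (F : nat -> nat) m n1 n2 : (m <= n1)%N -> (n1 <= n2)%N ->
  (forall i, (n1 <= i)%N -> F i = 0%N) ->
  (\sum_(m <= i < n1) F i = \sum_(m <= i < n2) F i)%N.
Proof.
move=> h1 h2 H; rewrite (@big_cat_nat _ _ _ n1 m n2 _ _ h1 h2) /= [X in (_ + X)%N]big1_seq ?addn0 //.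
by move=> i /andP [_]; rewrite mem_index_iota => /andP [/H].
Qed.

Section Jug.
Variables (a b : seq int) (n : nat).
Local Notation R := (Rdim a b n).

Lemma size_a_R : (size a <= R)%N. Proof. exact: leq_maxl. Qed.
Lemma size_b_R : (n + size b <= R)%N. Proof. exact: leq_maxr. Qed.
Lemma n_R : (n <= R)%N. Proof. exact: leq_trans (leq_addr _ _) size_b_R. Qed.

Lemma nth_a_out x : (R <= x)%N -> nth 0 a x = 0.
Proof. move=> h; rewrite nth_default //; exact: leq_trans size_a_R h. Qed.

Definition pn (p : {ffun 'I_R * 'I_R -> nat}) (i x : nat) : nat :=
  match (insub i : option 'I_R), (insub x : option 'I_R) with
  | Some i', Some x' => p (i', x')
  | _, _ => 0%N end.

Lemma pnE p (i x : 'I_R) : pn p i x = p (i, x).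
Proof. by rewrite /pn !valK. Qed.

Lemma pn_outx p i x : (R <= x)%N -> pn p i x = 0%N.
Proof.
move=> h; rewrite /pn; case: insubP => // *; case: insubP => // u; by rewrite ltnNge h.
Qed.

Lemma pn_outi p i x : (R <= i)%N -> pn p i x = 0%N.
Proof. move=> h; rewrite /pn; case: insubP => // u; by rewrite ltnNge h. Qed.

Definition inS p x t := (\sum_(0 <= i < t) pn p i x)%N.
Definition outS p k := (\sum_(0 <= j < R) pn p k j)%N.

Definition V p t k : int := nth 0 a (t + k) + (inS p (t + k) t)%:Z.
Definition bstate p t : seq int := trim (mkseq (V p t) R).
Definition build p : seq (seq int) := mkseq (bstate p) n.+1.

Lemma V_out p t k : (R <= t + k)%N -> V p t k = 0.
Proof.
move=> h; rewrite /V nth_a_out // /inS big1_seq // => i _; exact: pn_outx.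
Qed.

Lemma nth_bstate p t k : nth 0 (bstate p t) k = V p t k.
Proof.
rewrite /bstate nth_trim; case: (ltnP k R) => h; first by rewrite nth_mkseq.
rewrite nth_default ?size_mkseq // V_out //; exact: leq_trans h (leq_addl _ _).
Qed.

Lemma inS_S p x t : inS p x t.+1 = (inS p x t + pn p t x)%N.
Proof. by rewrite /inS big_nat_recr. Qed.

Definition D (ss : seq (seq int)) i x : int :=
  ent (nth [::] ss i.+1) (x - i) - ent (nth [::] ss i) (x - i).+1.

Lemma telescope ss t k : nth [::] ss 0 = trim a ->
  nth 0 (nth [::] ss t) k = nth 0 a (t + k) + \sum_(0 <= i < t) D ss i (t + k).
Proof.
move=> h0; elim: t k => [|t IH] k.
  by rewrite h0 nth_trim big_geq // addr0.
rewrite big_nat_recr //= addSnnS addrA -IH /D.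
have -> : (t + k.+1 - t = k.+1)%N by rewrite addKn.
rewrite /ent /=; ring.
Qed.


Lemma jstep_D ss i : JSeq a b n ss -> (i < n)%N -> exists c N,
  [/\ (forall k, (N < k)%N -> c k = 0%N),
      \sum_(1 <= k < N.+1) (c k)%:Z = ent (nth [::] ss i) 1
    & forall h, (0 < h)%N -> D ss i (i + h) = (c h)%:Z].
Proof.
case=> _ _ _ _ Hs hi; have [c [N [h1 [h2 h3]]]] := Hs i hi.
exists c, N; split=> // h hh; rewrite /D addKn h3 //; ring.
Qed.

Lemma D_ge0 ss i x : JSeq a b n ss -> (i < n)%N -> (i < x)%N -> 0 <= D ss i x.
Proof.
move=> H hi hx; have [c [N [_ _ h3]]] := jstep_D H hi.
by rewrite -(subnKC (ltnW hx)) h3 ?subn_gt0.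
Qed.

Lemma D_out ss i x : JSeq a b n ss -> (i < n)%N -> (R <= x)%N -> D ss i x = 0.
Proof.
move=> H hi hx.
have hnx : (n <= x)%N by exact: leq_trans n_R hx.
have := @telescope ss n (x - n) (let: And5 _ _ h _ _ := H in h).
rewrite subnKC // nth_a_out // add0r.
case: (H) => _ _ _ -> _; rewrite nth_trim nth_default; last first.
  by rewrite leq_subRL // (leq_trans size_b_R hx).
rewrite big_mkord => /esym E.
have := @psumr_eq0P _ _ xpredT (fun i : 'I_n => D ss i x).
move=> /(_ _ E (Ordinal hi)) -> //.
move=> j _; apply: D_ge0 => //.
  by apply: leq_trans (leq_trans (ltn_ord j) n_R) hx.
Qed.

Lemma D_pn ss i x : JSeq a b n ss -> (i < n)%N -> (i < x)%N ->
  D ss i x = (pn (jmap R n ss) i x)%:Z.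
Proof.
move=> H hi hx; case: (ltnP x R) => hxR; last by rewrite D_out // pn_outx.
have hiR : (i < R)%N by exact: ltn_trans hx hxR.
have := pnE (jmap R n ss) (Ordinal hiR) (Ordinal hxR) => /= ->.
by rewrite ffunE /= hx hi /= gez0_abs //; apply: D_ge0.
Qed.

Lemma JSeq_build ss : JSeq a b n ss -> ss = build (jmap R n ss).
Proof.
move=> H; have Hc := H; case: Hc => hsz hall h0 _ _.
apply: (@eq_from_nth _ [::]); first by rewrite size_mkseq.
move=> t ht; rewrite nth_mkseq -?hsz //.
apply: trimmed_eq; first by apply/eqP; exact: (allP hall _ (mem_nth [::] ht)).
  exact: trim_id.
move=> k; rewrite nth_bstate telescope // /V /inS PoszS.
congr (_ + _); apply: eq_big_nat => i /andP [_ hit].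
apply: D_pn => //; first by rewrite -ltnS -hsz; exact: leq_ltn_trans hit ht.
exact: leq_trans hit (leq_addr _ _).
Qed.


Local Notation PT := {ffun 'I_R * 'I_R -> nat}.

Definition Lsupp (p : {ffun 'I_R * 'I_R -> nat}) :=
  forall i x, ~~ ((i < x) && (i < n))%N -> pn p i x = 0%N.

Lemma Lsupp_of (p : PT) : (forall ij, ~~ Lam n ij -> p ij = 0%N) -> Lsupp p.
Proof.
move=> H i x hix; rewrite /pn; case: insubP => // u _ hu; case: insubP => // v _ hv.
by apply: H; rewrite /Lam /= hu hv.
Qed.

Lemma Lsupp_jmap ss : Lsupp (jmap R n ss).
Proof. by apply: Lsupp_of => ij; rewrite ffunE /Lam => /negbTE ->. Qed.

Lemma sum_delta (F : 'I_R -> int) (k : 'I_R) :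
  \sum_(i : 'I_R) (i == k)%:Z * F i = F k.
Proof.
rewrite (bigD1 k) //= eqxx mul1r big1 ?addr0 // => i /negbTE ->; by rewrite mul0r.
Qed.

Lemma outS_ord (p : PT) (k : 'I_R) : outS p k = (\sum_(j : 'I_R) p (k, j))%N.
Proof. by rewrite /outS big_mkord; apply: eq_bigr => j _; rewrite pnE. Qed.

Lemma inS_ord (p : PT) (k : 'I_R) : inS p k R = (\sum_(i : 'I_R) p (i, k))%N.
Proof. by rewrite /inS big_mkord; apply: eq_bigr => j _; rewrite pnE. Qed.

Lemma PLsumE (p : PT) (k : 'I_R) :
  \sum_(ij : 'I_R * 'I_R) (p ij)%:Z * ((ij.1 == k)%:Z - (ij.2 == k)%:Z)
  = (outS p k)%:Z - (inS p k R)%:Z.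
Proof.
transitivity (\sum_(i : 'I_R) \sum_(j : 'I_R) (p (i, j))%:Z * ((i == k)%:Z - (j == k)%:Z)).
  by rewrite pair_bigA; apply: eq_bigr => -[i j].
rewrite outS_ord inS_ord !PoszS.
under eq_bigr => i _ do (under eq_bigr => j _ do rewrite mulrBr; rewrite sumrB).
rewrite sumrB; congr (_ - _).
  under eq_bigr => i _ do (under eq_bigr => j _ do rewrite mulrC; rewrite -mulr_sumr).
  by rewrite (sum_delta (fun i => \sum_(j : 'I_R) (p (i, j))%:Z)).
rewrite exchange_big /=.
under eq_bigr => j _ do (under eq_bigr => i _ do rewrite mulrC; rewrite -mulr_sumr).
by rewrite (sum_delta (fun j => \sum_(i : 'I_R) (p (i, j))%:Z)).
Qed.

Definition deltan k : int := nth 0 a k - (if (n <= k)%N then nth 0 b (k - n) else 0).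

Lemma PL_eq (p : PT) : PL (@Lam R n) (delta a b n) p ->
  forall k, (outS p k)%:Z - (inS p k R)%:Z = deltan k.
Proof.
case=> _ H k; case: (ltnP k R) => hk.
  by have := H (Ordinal hk); rewrite PLsumE.
rewrite /outS /inS !big1_seq; last first.
- by move=> i _; rewrite pn_outi.
- by move=> i _; rewrite pn_outx.
rewrite /deltan nth_a_out // (leq_trans n_R hk) nth_default ?subrr //.
by rewrite leq_subRL ?(leq_trans n_R hk) // (leq_trans size_b_R hk).
Qed.

Lemma inS_ext (p : PT) x t1 t2 : Lsupp p -> (minn x n <= t1)%N -> (minn x n <= t2)%N ->
  inS p x t1 = inS p x t2.
Proof.
move=> Hs; wlog h12 : t1 t2 / (t1 <= t2)%N.
  move=> W h1 h2; case: (leqP t1 t2) => h; first exact: W.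
  by apply/esym/W => //; exact: ltnW.
move=> h1 _; apply: sum_ext0 => // i hi; apply: Hs.
move: h1; rewrite geq_min => /orP [] h; apply/negP => /andP [u v]; lia.
Qed.

Lemma outS_small (p : PT) k : PL (@Lam R n) (delta a b n) p -> (k < n)%N ->
  (outS p k)%:Z = nth 0 a k + (inS p k k)%:Z.
Proof.
move=> H hk; have := PL_eq H k; rewrite /deltan leqNgt hk /= subr0.
have Hs : Lsupp p by apply: Lsupp_of; case: H.
rewrite (@inS_ext p k R k) //; last by rewrite geq_minl.
  by move=> <-; ring.
by rewrite (leq_trans (geq_minl _ _)) // (leq_trans (ltnW hk) n_R).
Qed.

Lemma outS_big (p : PT) k : Lsupp p -> (n <= k)%N -> outS p k = 0%N.
Proof.
move=> Hs hk; rewrite /outS big1_seq // => j _; apply: Hs.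
by rewrite [(k < n)%N]ltnNge hk andbF.
Qed.

Lemma b_big (p : PT) k : PL (@Lam R n) (delta a b n) p -> (n <= k)%N ->
  nth 0 b (k - n) = nth 0 a k + (inS p k n)%:Z.
Proof.
move=> H hk; have Hs : Lsupp p by apply: Lsupp_of; case: H.
have := PL_eq H k; rewrite /deltan hk outS_big //.
rewrite (@inS_ext p k R n) //; last by rewrite geq_minr.
  move=> E; have -> : nth 0 b (k - n) = nth 0 a k - (0%N%:Z - (inS p k n)%:Z) by rewrite E; ring.
  ring.
by rewrite (leq_trans (geq_minr _ _)) // n_R.
Qed.

Lemma reindex (f : nat -> nat) k M : (forall j, (j <= k)%N -> f j = 0%N) ->
  (forall j, (R <= j)%N -> f j = 0%N) -> (R <= M)%N -> (0 < M)%N ->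
  (\sum_(0 <= j < R) f j = \sum_(1 <= h < M) f (k + h))%N.
Proof.
move=> H1 H2 hM hM0.
rewrite (@sum_ext0 f 0 R (k + M)) //; last exact: leq_trans hM (leq_addl _ _).
rewrite (@big_cat_nat _ _ _ k.+1) //=; last by rewrite -addn1 leq_add2l.
rewrite big1_seq ?add0n; last by move=> j /andP [_]; rewrite mem_index_iota => /andP [_ /H1].
rewrite -add1n big_addn addKn; apply: eq_big_nat => h _; by rewrite addnC.
Qed.

Lemma out_jmap ss k : JSeq a b n ss -> (k < n)%N ->
  (outS (jmap R n ss) k)%:Z = nth 0 a k + (inS (jmap R n ss) k k)%:Z.
Proof.
move=> H hk; have [c [N [h1 h2 h3]]] := jstep_D H hk.
set p := jmap R n ss.
have h0 : nth [::] ss 0 = trim a by case: H.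
have E1 : ent (nth [::] ss k) 1 = nth 0 a k + (inS p k k)%:Z.
  rewrite /ent /= (@telescope ss k 0 h0) addn0 /inS PoszS; congr (_ + _).
  apply: eq_big_nat => i /andP [_ hi]; apply: D_pn => //; exact: ltn_trans hi hk.
rewrite -E1 -h2 -PoszS; congr Posz.
have A1 : forall j, (j <= k)%N -> pn p k j = 0%N.
  by move=> j hj; apply: Lsupp_jmap; rewrite ltnNge hj.
have A2 : forall j, (R <= j)%N -> pn p k j = 0%N by move=> j hj; rewrite pn_outx.
have A3 : (R <= (N + R).+1)%N by apply: ltnW; rewrite ltnS leq_addl.
rewrite /outS (@reindex (pn p k) k (N + R).+1 A1 A2 A3 (ltn0Sn _)).
symmetry; rewrite (@sum_ext0 c 1 N.+1 (N + R).+1) //; last by rewrite ltnS leq_addr.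
apply: eq_big_nat => h /andP [hh _].
have := h3 h hh; rewrite D_pn //; last by rewrite -{1}(addn0 k) ltn_add2l.
by case.
Qed.

Lemma PL_jmap ss : JSeq a b n ss -> PL (@Lam R n) (delta a b n) (jmap R n ss).
Proof.
move=> H; split; first by move=> ij; rewrite ffunE /Lam => /negbTE ->.
have h0 : nth [::] ss 0 = trim a by case: H.
have hS := Lsupp_jmap ss.
move=> k; rewrite PLsumE /delta; case: (ltnP k n) => hk.
  rewrite out_jmap // (@inS_ext _ k R k hS); first by ring.
    by rewrite (leq_trans (geq_minl _ _)) // (leq_trans (ltnW hk) n_R).
  by rewrite geq_minl.
rewrite outS_big // (@inS_ext _ k R n hS); last by rewrite geq_minr.
  2: by rewrite (leq_trans (geq_minr _ _)) // n_R.
have := @telescope ss n (k - n) h0; rewrite subnKC //.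
case: (H) => _ _ _ -> _; rewrite nth_trim => ->.
rewrite /inS PoszS.
have -> : \sum_(0 <= i < n) D ss i k = \sum_(0 <= i < n) (pn (jmap R n ss) i k)%:Z.
  apply: eq_big_nat => i /andP [_ hi]; apply: D_pn => //; exact: leq_trans hi hk.
ring.
Qed.

Lemma nth_build (p : PT) t : (t <= n)%N -> nth [::] (build p) t = bstate p t.
Proof. by move=> h; rewrite nth_mkseq. Qed.

Lemma ent_bstate (p : PT) t k : (0 < k)%N -> ent (bstate p t) k = V p t k.-1.
Proof. by move=> h; rewrite /ent nth_bstate. Qed.

Lemma V_succ (p : PT) t k : V p t.+1 k = V p t k.+1 + (pn p t (t.+1 + k))%:Z.
Proof. by rewrite /V inS_S PoszD addSnnS addrA. Qed.

Lemma JSeq_build_PL (p : PT) : PL (@Lam R n) (delta a b n) p -> JSeq a b n (build p).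
Proof.
move=> H; have Hs : Lsupp p by apply: Lsupp_of; case: H.
split.
- by rewrite size_mkseq.
- by apply/allP => s /mapP [t _ ->]; rewrite /bstate trim_id.
- rewrite nth_build // /bstate; apply: trim_eq_nth => k.
  have := nth_bstate p 0 k; rewrite /bstate nth_trim => ->.
  by rewrite /V add0n /inS big_geq // addr0.
- rewrite nth_build // /bstate; apply: trim_eq_nth => k.
  have := nth_bstate p n k; rewrite /bstate nth_trim => ->.
  by rewrite /V -{3}[k](addKn n) (@b_big p (n + k) H (leq_addr _ _)).
move=> t ht; rewrite !nth_build ?(ltnW ht) //.
exists (fun h => pn p t (t + h)), R; split; [|split].
- by move=> k hk; rewrite pn_outx // (leq_trans (ltnW hk)) // leq_addl.
- rewrite ent_bstate // -PoszS /V addn0 -(outS_small H ht) /outS.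
  congr Posz; symmetry; apply: reindex => //.
  by move=> j hj; apply: Hs; rewrite ltnNge hj.
  by move=> j hj; rewrite pn_outx.
move=> k hk; rewrite !ent_bstate // V_succ prednK //.
by rewrite addSnnS prednK.
Qed.

Lemma jmap_build (p : PT) : PL (@Lam R n) (delta a b n) p -> jmap R n (build p) = p.
Proof.
move=> H; apply/ffunP => -[i x]; rewrite ffunE.
case: ifP => [/andP [hix hin] | hL]; last first.
  by case: H => Hs _; rewrite Hs // /Lam hL.
rewrite !nth_build ?(ltnW hin) //= !ent_bstate ?subn_gt0 //.
have hp : (0 < x - i)%N by rewrite subn_gt0.
rewrite /= V_succ prednK // addSnnS prednK // subnKC ?(ltnW hix) //.
have -> : V p i (x - i) + (pn p i x)%:Z - V p i (x - i) = (pn p i x)%:Z by ring.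
by rewrite absz_nat pnE.
Qed.

Lemma cap_build (p : PT) (m : nat) : PL (@Lam R n) (delta a b n) p ->
  (forall k : 'I_R, nth 0 a k + (\sum_(i : 'I_R) p (i, k))%:Z <= m%:Z) ->
  handcap m (build p).
Proof.
move=> H C s; rewrite /build /mkseq => /mapP [t ht ->] x.
rewrite /bstate => /mem_trim; rewrite /mkseq => /mapP [k hk ->].
rewrite mem_iota /= in ht.
case: (ltnP (t + k) R) => h; last by rewrite V_out.
have := C (Ordinal h); rewrite -inS_ord /=; apply: le_trans.
rewrite /V lerD2l lez_nat /inS.
rewrite (@big_cat_nat _ _ _ t 0 R) //= ?leq_addr //.
rewrite add0n ltnS in ht; exact: leq_trans ht n_R.
Qed.

Lemma build_cap (p : PT) (m : nat) : PL (@Lam R n) (delta a b n) p ->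
  handcap m (build p) ->
  forall k : 'I_R, nth 0 a k + (\sum_(i : 'I_R) p (i, k))%:Z <= m%:Z.
Proof.
move=> H C k; rewrite -inS_ord.
have Hs : Lsupp p by apply: Lsupp_of; case: H.
have : nth 0 (bstate p (minn k n)) (k - minn k n) <= m%:Z.
  apply: nth_le; apply: C; rewrite /build /mkseq; apply: map_f.
  by rewrite mem_iota /= add0n ltnS geq_minr.
rewrite nth_bstate /V subnKC ?geq_minl // (@inS_ext p k (minn k n) R) //.
by rewrite (leq_trans (geq_minr _ _)) // n_R.
Qed.

Definition Bd : nat := `| (\sum_(k : 'I_R) (k : nat)%:Z * delta a b n k)%R |%N.

Lemma bound (p : PT) : PL (@Lam R n) (delta a b n) p -> forall ij, (p ij <= Bd)%N.
Proof.
move=> H ij; have [Hs HE] := H.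
set S := \sum_(ij : 'I_R * 'I_R) (p ij)%:Z * ((ij.2 : nat)%:Z - (ij.1 : nat)%:Z).
have T : forall ij, 0 <= (p ij)%:Z /\
    (p ij)%:Z <= (p ij)%:Z * ((ij.2 : nat)%:Z - (ij.1 : nat)%:Z).
  move=> kl; split => //; case: (boolP (Lam n kl)) => hL; last by rewrite (Hs kl hL) mul0r.
  apply: ler_peMr => //; move: hL; rewrite /Lam => /andP [h _].
  by rewrite lerBrDr -PoszD lez_nat add1n.
have E : S = - \sum_(k : 'I_R) (k : nat)%:Z * delta a b n k.
  under [in RHS]eq_bigr => k _ do rewrite -HE mulr_sumr.
  rewrite exchange_big /= -sumrN; apply: eq_bigr => kl _.
  rewrite -sumrN.
  transitivity ((p kl)%:Z * (\sum_(k : 'I_R) (kl.2 == k)%:Z * (k : nat)%:Z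
                      - \sum_(k : 'I_R) (kl.1 == k)%:Z * (k : nat)%:Z)).
    by rewrite (eq_bigr (fun k => (k == kl.2)%:Z * (k : nat)%:Z)) ?sum_delta;
       [rewrite (eq_bigr (fun k => (k == kl.1)%:Z * (k : nat)%:Z)) ?sum_delta // => k _;
        rewrite eq_sym | move=> k _; rewrite eq_sym].
  rewrite -sumrB mulr_sumr; apply: eq_bigr => k _; ring.
have S0 : 0 <= S by apply: sumr_ge0 => kl _; apply: le_trans (T kl).2; exact: (T kl).1.
have hp : (p ij)%:Z <= S.
  apply: le_trans (T ij).2 _; rewrite /S (bigD1 ij) //= lerDl.
  by apply: sumr_ge0 => kl _; apply: le_trans (T kl).2; exact: (T kl).1.
rewrite /Bd -abszN -E -lez_nat gez0_abs //.
Qed.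

Definition PLb (p : PT) : bool :=
  [forall ij, Lam n ij || (p ij == 0%N)] &&
  [forall k : 'I_R, \sum_(ij : 'I_R * 'I_R) (p ij)%:Z * ((ij.1 == k)%:Z - (ij.2 == k)%:Z)
                    == delta a b n k].

Lemma PLbP (p : PT) : PL (@Lam R n) (delta a b n) p <-> PLb p.
Proof.
split.
  case=> H1 H2; apply/andP; split; apply/forallP => x.
    by case: (boolP (Lam n x)) => //= /H1 ->.
  by rewrite H2.
case/andP => /forallP H1 /forallP H2; split.
  by move=> ij hL; have := H1 ij; rewrite (negbTE hL) => /eqP.
by move=> k; apply/eqP.
Qed.

Definition cands (B : nat) : seq PT :=
  map (fun f : {ffun 'I_R * 'I_R -> 'I_B.+1} => ([ffun ij => nat_of_ord (f ij)] : PT))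
    (enum {ffun 'I_R * 'I_R -> 'I_B.+1}).

Definition lPL : seq PT := filter PLb (cands Bd).

Lemma lPL_uniq : uniq lPL.
Proof.
apply: filter_uniq; rewrite map_inj_uniq ?enum_uniq //.
move=> f g /ffunP E; apply/ffunP => ij; apply: val_inj; have := E ij; by rewrite !ffunE.
Qed.

Lemma mem_lPL (p : PT) : p \in lPL <-> PL (@Lam R n) (delta a b n) p.
Proof.
rewrite mem_filter; split; first by case/andP => /PLbP.
move=> H; apply/andP; split; first exact/PLbP.
apply/mapP; exists [ffun ij => (inord (p ij) : 'I_Bd.+1)]; first by rewrite mem_enum.
by apply/ffunP => ij; rewrite !ffunE inordK // ltnS bound.
Qed.

Definition capb (m : nat) (p : PT) : bool :=
  [forall k : 'I_R, nth 0 a k + (\sum_(i : 'I_R) p (i, k))%:Z <= m%:Z].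

Definition lQL m : seq PT := filter (capb m) lPL.
End Jug.

Unset Implicit Arguments.

Theorem mainTheorem7 (a b : seq int) (n m : nat)
  (hsum : \sum_(x <- a) x = \sum_(x <- b) x)
  (hn : (0 < n)%N) (hm : (0 < m)%N) :
  let R := Rdim a b n in
  [/\ (forall ss, JS a b n m ss -> QL a b n m (jmap R n ss)),
      (forall ss1 ss2, JS a b n m ss1 -> JS a b n m ss2 ->
         jmap R n ss1 = jmap R n ss2 -> ss1 = ss2),
      (forall p : {ffun 'I_R * 'I_R -> nat}, QL a b n m p ->
         exists2 ss, JS a b n m ss & jmap R n ss = p),
      (exists k, card_is (JS a b n m) k /\ card_is (@QL R a b n m) k)
    & (exists k, card_is (JSeq a b n) k /\
                 card_is (PL (@Lam R n) (delta a b n)) k)].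
Proof.
cbv zeta.
have memQ : forall p, p \in @lQL a b n m <-> QL a b n m p.
  move=> p; rewrite mem_filter; split.
    by case/andP => /forallP C /mem_lPL HP; split.
  by case=> HP C; rewrite (proj2 (mem_lPL p) HP) andbT; apply/forallP.
split.
- move=> ss [HJ HC]; split; first exact: PL_jmap.
  by apply: build_cap (PL_jmap HJ) _; rewrite -(JSeq_build HJ).
- move=> ss1 ss2 [H1 _] [H2 _] E.
  by rewrite (JSeq_build H1) (JSeq_build H2) E.
- move=> p [HP HC]; exists (build p); last exact: jmap_build.
  by split; [exact: JSeq_build_PL | exact: cap_build].
- exists (size (@lQL a b n m)); split; last first.
    by exists (@lQL a b n m); split => //; apply: filter_uniq; apply: lPL_uniq.
  exists (map (@build a b n) (@lQL a b n m)); split; last by rewrite size_map.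
  + rewrite map_inj_in_uniq; first by apply: filter_uniq; apply: lPL_uniq.
    move=> x y /memQ [Hx _] /memQ [Hy _] E.
    by rewrite -(jmap_build Hx) -(jmap_build Hy) E.
  + move=> ss; split.
      case/mapP => p /memQ [HP HC] ->; split; first exact: JSeq_build_PL.
      exact: cap_build.
    case=> HJ HC; apply/mapP; exists (jmap (Rdim a b n) n ss); last exact: JSeq_build.
    apply/memQ; split; first exact: PL_jmap.
    by apply: build_cap (PL_jmap HJ) _; rewrite -(JSeq_build HJ).
- exists (size (@lPL a b n)); split; last first.
    by exists (@lPL a b n); split => //; [exact: lPL_uniq | exact: mem_lPL].
  exists (map (@build a b n) (@lPL a b n)); split; last by rewrite size_map.
  + rewrite map_inj_in_uniq; first exact: lPL_uniq.
    move=> x y /mem_lPL Hx /mem_lPL Hy E.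
    by rewrite -(jmap_build Hx) -(jmap_build Hy) E.
  + move=> ss; split.
      by case/mapP => p /mem_lPL HP ->; exact: JSeq_build_PL.
    move=> HJ; apply/mapP; exists (jmap (Rdim a b n) n ss); last exact: JSeq_build.
    by apply/mem_lPL; exact: PL_jmap.
Qed.
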